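(* Consider the $(\mu+1)$ EA with genotypic or phenotypic clearing, niche capacity $\kappa\in\mathbb{N}$, population size $\mu\ge\kappa n^2/4$ and clearing radius $\sigma=n/2$ on $\textsc{Twomax}$, with a population containing $\kappa$ copies of $0^n$ (respectively $1^n$). Then the expected time (number of generations) until a search point with at least (respectively at most) $n/2$ ones is found is $O(\mu n\log\mu)$.
   Context: $\textsc{Twomax}(x)=\max\{|x|_1,\,n-|x|_1\}$ for $x\in\{0,1\}^n$, where $|x|_1$ is the number of ones; its optima are $0^n$ and $1^n$. The $(\mu+1)$ EA with clearing (population size $\mu$, clearing radius $\sigma$, niche capacity $\kappa$, distance function $\mathrm{d}$): $P_0$ consists of $\mu$ bit strings chosen independently and uniformly at random. In generation $t$: choose a parent $x\in P_t$ uniformly at random; create $y$ by flipping each bit of $x$ independently with probability $1/n$; let $P_t^*=P_t\cup\{y\}$; update the fitness values of $P_t^*$ by the clearing procedure: sort $P_t^*$ by decreasing fitness; for $i=1,\dots,|P_t^*|$, if the current fitness of $P[i]$ is positive, set $w:=1$ and for $j=i+1,\dots,|P_t^*|$: if the current fitness of $P[j]$ is positive and $\mathrm{d}(P[i],P[j])<\sigma$ then, if $w<\kappa$ set $w:=w+1$, else set the fitness of $P[j]$ to $0$. Individuals whose fitness is not reset are winners, the others are cleared. Then choose $z\in P_t$ with worst (cleared) fitness uniformly at random; if the (cleared) fitness of $y$ is at least that of $z$, set $P_{t+1}=P_t^*\setminus\{z\}$, otherwise $P_{t+1}=P_t^*\setminus\{y\}$. Genotypic clearing uses the Hamming distance $\mathrm{d}(x,y)=H(x,y)$;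 phenotypic clearing uses $\mathrm{d}(x,y)=\big||x|_1-|y|_1\big|$. *)

(* Defs.v *)
From HB Require Import structures.
From mathcomp Require Import all_boot all_order all_algebra.
From mathcomp Require Import all_classical all_reals exp.
Set Implicit Arguments. Unset Strict Implicit. Unset Printing Implicit Defensive.
Import Order.TTheory GRing.Theory Num.Theory.

Definition bits (n : nat) := n.-tuple bool.

Definition ones n (x : bits n) : nat := count id x.

Definition twomax n (x : bits n) : nat := maxn (ones x) (n - ones x).

Definition zeros_str n : bits n := [tuple of nseq n false].
Definition ones_str n : bits n := [tuple of nseq n true].

Definition hamming n (x y : bits n) : nat := \sum_(i < n) (tnth x i != tnth y i).

Definition phendist n (x y : bits n) : nat :=
  (ones x - ones y) + (ones y - ones x).

(* geno = true : genotypic clearing; geno = false : phenotypic clearing *)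
Definition dist (geno : bool) n : bits n -> bits n -> nat :=
  if geno then @hamming n else @phendist n.

(* The (multi)set P_t^* is represented as a list L of search points; the
   individuals are identified by their positions 0..size L - 1.  A fitness
   assignment is a function from positions to nat.  The clearing radius is
   sigma = n/2, so "d < sigma" is "2 * d < n". *)
Section Clearing.
Variables (geno : bool) (n kappa : nat) (L : seq (bits n)).

Definition ind (k : nat) : bits n := nth (zeros_str n) L k.

Definition reset (f : nat -> nat) (j : nat) : nat -> nat :=
  fun k => if k == j then 0 else f k.

Fixpoint clear_inner (i : nat) (rest : seq nat) (w : nat) (f : nat -> nat)
  : nat -> nat :=
  match rest with
  | [::] => f
  | j :: rest' =>
      if (0 < f j) && (2 * dist geno (ind i) (ind j) < n) then
        if w < kappa then clear_inner i rest' w.+1 f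
        else clear_inner i rest' w (reset f j)
      else clear_inner i rest' w f
  end.

Fixpoint clear_outer (order : seq nat) (f : nat -> nat) : nat -> nat :=
  match order with
  | [::] => f
  | i :: rest =>
      clear_outer rest (if 0 < f i then clear_inner i rest 1 f else f)
  end.

End Clearing.

(* The paper does not fix
   how ties are broken; the theorem is quantified over all such rules. *)
Definition valid_sort n (tb : seq (bits n) -> seq nat) : Prop :=
  forall L : seq (bits n),
    perm_eq (tb L) (iota 0 (size L)) /\
    sorted (fun i j => twomax (ind L j) <= twomax (ind L i)) (tb L).

Definition cleared_fit geno n kappa (tb : seq (bits n) -> seq nat)
  (L : seq (bits n)) : nat -> nat :=
  clear_outer geno kappa L (tb L) (fun k => twomax (ind L k)).

Definition pop mu n := mu.-tuple (bits n).

Section Step.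
Variables (R : realType) (geno : bool) (n kappa mu : nat)
          (tb : seq (bits n) -> seq nat).
Local Open Scope ring_scope.

Definition mutp (x y : bits n) : R :=
  \prod_(k < n) (if tnth x k == tnth y k then 1 - n%:R^-1 else n%:R^-1).

(* fitness of P_t^* = P ++ [y]; y has position mu *)
Definition fitstar (P : pop mu n) (y : bits n) : nat -> nat :=
  cleared_fit geno kappa tb (rcons P y).

Definition worst (P : pop mu n) (y : bits n) : seq 'I_mu :=
  seq.filter (fun k : 'I_mu =>
     [forall k' : 'I_mu, (fitstar P y k <= fitstar P y k')%N]) (enum 'I_mu).

Definition next_pop (P : pop mu n) (y : bits n) (z : 'I_mu) : pop mu n :=
  if (fitstar P y z <= fitstar P y mu)%N
  then [tuple (if i == z then y else tnth P i) | i < mu]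
  else P.

(* probability that one generation starting from P creates an offspring y
   with ~~ tgt y and yields the population P' *)
Definition trans (tgt : pred (bits n)) (P P' : pop mu n) : R :=
  \sum_(i < mu) mu%:R^-1 *
   \sum_(y : bits n | ~~ tgt y) mutp (tnth P i) y *
     \sum_(z <- worst P y) (size (worst P y))%:R^-1 *
        ((next_pop P y z == P')%:R).

(* killed distribution: surv tgt P0 t P = Pr[T > t and P_t = P], where T is
   the first generation in which a search point satisfying tgt is found
   (T = 0 if P0 already contains one). *)
Fixpoint surv (tgt : pred (bits n)) (P0 : pop mu n) (t : nat) (P : pop mu n)
  : R :=
  match t with
  | 0 => ((P == P0) && ~~ has tgt P0)%:R
  | t'.+1 => \sum_(Q : pop mu n) surv tgt P0 t' Q * trans tgt Q P
  end.

Definition tail_prob (tgt : pred (bits n)) (P0 : pop mu n) (t : nat) : R :=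
  \sum_(P : pop mu n) surv tgt P0 t P.

(* E[T] <= B, stated as: every partial sum of E[T] = sum_t Pr[T > t] is <= B *)
Definition expected_time_le (tgt : pred (bits n)) (P0 : pop mu n) (B : R)
  : Prop :=
  forall N : nat, \sum_(t < N) tail_prob tgt P0 t <= B.

End Step.

Definition atleast_half n : pred (bits n) := fun x => n <= 2 * ones x.
Definition atmost_half n : pred (bits n) := fun x => 2 * ones x <= n.

(* Main.v *)
Require Import Defs.
From HB Require Import structures.
From mathcomp Require Import all_boot all_order all_algebra.
From mathcomp Require Import all_classical all_reals exp.
From mathcomp Require Import zify ring lra.
Import Order.TTheory GRing.Theory Num.Theory.
Local Open Scope ring_scope.
Set Implicit Arguments. Unset Strict Implicit. Unset Printing Implicit Defensive.
Section Mut.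
Variables (R : realType) (n : nat).

Lemma count_tnth (a : pred bool) (t : n.-tuple bool) :
  count a t = (\sum_(i < n) a (tnth t i))%N.
Proof. by rewrite -sum1_count big_tuple big_mkcond /=; apply: eq_bigr => i _; case: (a _). Qed.

Lemma sum_tuple_prod (F : 'I_n -> bool -> R) :
  \sum_(y : n.-tuple bool) \prod_(k < n) F k (tnth y k) = \prod_(k < n) (F k true + F k false).
Proof.
have -> : \prod_(k < n) (F k true + F k false) = \prod_(k < n) \sum_(j : bool) F k j.
  by apply: eq_bigr => k _; rewrite big_bool.
rewrite bigA_distr_bigA /=.
rewrite (reindex (fun f : {ffun 'I_n -> bool} => [tuple f i | i < n])) /=.
  by apply: eq_bigr => f _; apply: eq_bigr => k _; rewrite tnth_mktuple.
apply: onW_bij; exists (fun y : n.-tuple bool => [ffun i => tnth y i]).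
  by move=> f; apply/ffunP => i; rewrite ffunE tnth_mktuple.
by move=> y; apply: eq_from_tnth => i; rewrite tnth_mktuple ffunE.
Qed.

End Mut.
Section Mut2.
Variables (R : realType) (n : nat).
Hypothesis n_gt0 : (0 < n)%N.

Definition ucnt (b : bool) (x : bits n) : nat := count (fun c => c != b) x.

Lemma pp_ge0 : 0 <= (n%:R : R)^-1. Proof. by rewrite invr_ge0 ler0n. Qed.
Lemma pp_le1 : (n%:R : R)^-1 <= 1.
Proof. by rewrite invr_le1 ?ler1n ?unitfE ?pnatr_eq0 -?lt0n ?ltr0n. Qed.

Lemma mutp_ge0 (x y : bits n) : 0 <= mutp R x y.
Proof.
rewrite /mutp; apply: prodr_ge0 => k _; case: ifP => _; last exact: pp_ge0.
by rewrite subr_ge0 pp_le1.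
Qed.

Lemma sum_mutp (x : bits n) : \sum_y mutp R x y = 1.
Proof.
rewrite /mutp (sum_tuple_prod (fun k c => if tnth x k == c then 1 - (n%:R : R)^-1 else n%:R^-1)).
by rewrite big1 // => k _; case: (tnth x k) => /=; lra.
Qed.

Lemma ucnt_sumR b (x : bits n) : ((ucnt b x)%:R : R) = \sum_(k < n) ((tnth x k != b)%:R : R).
Proof. by rewrite /ucnt count_tnth natr_sum. Qed.

Lemma ucnt_le b (x : bits n) : (ucnt b x <= n)%N.
Proof. by rewrite /ucnt (leq_trans (count_size _ _)) // size_tuple. Qed.

Lemma exp_ucnt b (x : bits n) :
  \sum_y mutp R x y * (ucnt b y)%:R =
  (ucnt b x)%:R * (1 - 2 * (n%:R)^-1) + n%:R * n%:R^-1.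
Proof.
set p := (n%:R : R)^-1.
under eq_bigr => y _ do rewrite ucnt_sumR mulr_sumr.
rewrite exchange_big /=.
transitivity (\sum_(k < n) (if tnth x k != b then 1 - p else p)).
  apply: eq_bigr => k _.
  pose G := fun (j : 'I_n) (c : bool) =>
     (if tnth x j == c then 1 - p else p) * (if j == k then ((c != b)%:R : R) else 1).
  transitivity (\sum_(y : n.-tuple bool) \prod_(j < n) G j (tnth y j)).
    apply: eq_bigr => y _; rewrite /G big_split /= -big_mkcond big_pred1_eq //.
  rewrite sum_tuple_prod (bigD1 k) //= big1 ?mulr1.
    rewrite /G eqxx /=; clear G; by case: b; case: (tnth x k) => /=; rewrite ?mulr1 ?mulr0 ?addr0 ?add0r.
  move=> j /negbTE jk; rewrite /G jk !mulr1.
  by case: (tnth x j) => /=; lra.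
have -> : n%:R * p = \sum_(k < n) p by rewrite sumr_const card_ord mulr_natl.
rewrite ucnt_sumR mulr_suml -big_split /=; apply: eq_bigr => k _.
case: (tnth x k != b) => /=; rewrite /p; lra.
Qed.

Definition flip (k : 'I_n) (x : bits n) : bits n :=
  [tuple (if j == k then ~~ tnth x j else tnth x j) | j < n].

Lemma mutp_flip k (x : bits n) :
  mutp R x (flip k x) = n%:R^-1 * (1 - n%:R^-1) ^+ n.-1.
Proof.
rewrite /mutp (bigD1 k) //= tnth_mktuple eqxx.
have -> : (tnth x k == ~~ tnth x k) = false by case: (tnth x k).
congr (_ * _).
rewrite (eq_bigr (fun _ => 1 - (n%:R : R)^-1)); last first.
  by move=> j /negbTE jk; rewrite tnth_mktuple jk eqxx.
rewrite prodr_const cardC1 card_ord //.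
Qed.

Lemma ucnt_flip b k (x : bits n) : tnth x k = b -> ucnt b (flip k x) = (ucnt b x).+1.
Proof.
move=> xk; rewrite /ucnt !count_tnth (bigD1 k) //= [in RHS](bigD1 k) //= tnth_mktuple eqxx xk.
have -> : (~~ b != b) = true by clear xk; case: b.
rewrite add1n eqxx add0n; congr (_.+1); apply: eq_bigr => j /negbTE jk; by rewrite tnth_mktuple jk.
Qed.

Lemma bernoulli (p : R) (m : nat) : 0 <= p <= 1 -> 1 - m%:R * p <= (1 - p) ^+ m.
Proof.
move=> /andP[p0 p1]; have q0 : 0 <= 1 - p by lra.
elim: m => [|m IH]; first by rewrite mul0r subr0 expr0.
rewrite exprS -natr1; have m0 : 0 <= (m%:R : R) := ler0n _ _.
have [h|h] := lerP 0 (1 - m%:R * p).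
  apply: (le_trans _ (ler_wpM2l q0 IH)); nra.
apply: (le_trans _ (mulr_ge0 q0 (exprn_ge0 m q0))); nra.
Qed.

End Mut2.
Section Bits.
Variable n : nat.

Definition anchor (b : bool) : bits n := [tuple of nseq n b].
Definition ntg (b : bool) (x : bits n) : bool := (2 * ucnt b x < n)%N.

Lemma ones_ucnt (x : bits n) : ones x = ucnt false x.
Proof. by rewrite /ones /ucnt; apply: eq_count => c; case: c. Qed.

Lemma ucnt_true (x : bits n) : ucnt true x = (n - ones x)%N.
Proof.
have h := count_predC id x; rewrite size_tuple in h.
have h2 : count (fun c => c != true) x = count (predC id) x.
  by apply: eq_count => c; case: c.
rewrite /ones /ucnt h2; lia.
Qed.

Lemma ucnt_neg b (x : bits n) : ucnt (~~ b) x = (n - ucnt b x)%N.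
Proof.
have hle := count_size id x; rewrite size_tuple in hle.
case: b; rewrite /= ucnt_true -ones_ucnt //; rewrite /ones in hle *; lia.
Qed.

Lemma twomaxE b (x : bits n) : twomax x = maxn (ucnt b x) (n - ucnt b x).
Proof.
have hle := count_size id x; rewrite size_tuple in hle.
rewrite /twomax; case: b; rewrite ?ucnt_true -?ones_ucnt //.
rewrite /ones in hle *; lia.
Qed.

Lemma twomax_ntg b (x : bits n) : ntg b x -> twomax x = (n - ucnt b x)%N.
Proof. rewrite /ntg (twomaxE b) => h; lia. Qed.

Lemma ucnt0 b (x : bits n) : (ucnt b x == 0)%N = (x == anchor b).
Proof.
rewrite /ucnt -leqn0 leqNgt -has_count.
have -> : has (fun c => c != b) x = has (predC (pred1 b)) x by [].
rewrite has_predC negbK; apply/all_pred1P/eqP.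
  by move=> h; apply: val_inj; rewrite /= h size_tuple.
by move=> ->; rewrite /= size_nseq.
Qed.

Lemma ucnt_anchor b : ucnt b (anchor b) = 0%N.
Proof. by apply/eqP; rewrite ucnt0. Qed.

Lemma dist_anchor geno b (x : bits n) : dist geno (anchor b) x = ucnt b x.
Proof.
case: geno => /=.
  rewrite /hamming /ucnt count_tnth; apply: eq_bigr => i _.
  by rewrite tnth_nseq eq_sym.
have hle := count_size id x; rewrite size_tuple in hle.
have ha : ones (anchor b) = if b then n else 0%N.
  rewrite /ones /anchor /=; case: b; rewrite count_nseq /= ?mul1n ?mul0n //.
rewrite /phendist ha; clear ha; case: b; rewrite ?ucnt_true -?ones_ucnt; rewrite /ones in hle *; lia.
Qed.

End Bits.
Section Clear.
Variables (geno : bool) (n kappa : nat) (L : seq (bits n)).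

Lemma inner_all i rest w f :
  uniq rest ->
  (forall j, j \in rest -> (0 < f j)%N && (2 * dist geno (ind L i) (ind L j) < n)%N) ->
  (0 < w <= kappa)%N ->
  clear_inner geno kappa L i rest w f =
  (fun k => if k \in drop (kappa - w) rest then 0%N else f k).
Proof.
elim: rest w f => [|j rest IH] w f /=.
  by move=> _ _ _; apply: funext => k; by case: (kappa - w)%N.
move=> /andP[jr ur] hall hw.
rewrite hall ?mem_head //.
have hall' : forall g, (forall j', j' \in rest -> g j' = f j') ->
  forall j', j' \in rest -> (0 < g j')%N && (2 * dist geno (ind L i) (ind L j') < n)%N.
  by move=> g hg j' hj'; rewrite hg // hall // inE hj' orbT.
case: ltnP => hwk.
  rewrite (IH w.+1 f ur); [|by apply: hall' => j' _|lia].
  have -> : (kappa - w = (kappa - w.+1).+1)%N by lia.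
  by [].
have -> : w = kappa by lia.
rewrite (IH kappa (reset f j) ur); [| |lia].
  rewrite subnn drop0; apply: funext => k /=.
  by rewrite /reset inE; case: (k == j) => //=; case: (k \in rest).
apply: hall' => j' hj'; rewrite /reset.
by case: eqP => // e; rewrite -e hj' in jr.
Qed.

Lemma inner_none i rest w f :
  (count (fun j => 0 < f j)%N rest + w <= kappa)%N ->
  clear_inner geno kappa L i rest w f = f.
Proof.
elim: rest w => [|j rest IH] w //=.
case: (0 < f j)%N => /= h.
  case: (_ < n)%N; last by rewrite IH //; lia.
  rewrite ifT; last by lia.
  by rewrite IH //; lia.
by rewrite IH.
Qed.

Lemma outer_none s f :
  (count (fun j => 0 < f j)%N s < kappa)%N -> clear_outer geno kappa L s f = f.
Proof.
elim: s => [|i s IH] //=.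
case: (ltnP 0 (f i)) => /= hi h.
  rewrite inner_none; last by lia.
  by rewrite IH //; lia.
by rewrite IH //; lia.
Qed.

Lemma outer_all i0 rest f :
  (0 < kappa)%N -> uniq (i0 :: rest) -> (0 < f i0)%N ->
  (forall j, j \in rest -> (0 < f j)%N && (2 * dist geno (ind L i0) (ind L j) < n)%N) ->
  clear_outer geno kappa L (i0 :: rest) f =
  (fun k => if k \in drop kappa (i0 :: rest) then 0%N else f k).
Proof.
move=> k0 /andP[_ ur] hf0 hall /=.
have hk : (0 < 1 <= kappa)%N by lia.
rewrite hf0 (inner_all ur hall hk).
rewrite outer_none.
  have -> : (kappa - 1 = kappa.-1)%N by lia.
  by case: kappa k0.
set g := (fun k => if k \in drop (kappa - 1) rest then 0%N else f k).
rewrite -[X in count _ X](cat_take_drop (kappa - 1) rest) count_cat.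
have -> : count (fun j => 0 < g j)%N (drop (kappa - 1) rest) = 0%N.
  apply/eqP; rewrite -leqn0 leqNgt -has_count; apply/hasPn => k hk'.
  by rewrite /g hk'.
rewrite addn0 (leq_ltn_trans (count_size _ _)) // size_take.
case: (ltnP (kappa - 1) (size rest)) => h /=; clear -k0 h; move: h; case: (size rest) => [|s] h; lia.
Qed.

End Clear.

Lemma take_allP (T : eqType) (r : rel T) (P : pred T) (s : seq T) (m : nat) :
  (forall a c, a \in s -> c \in s -> r a c -> ~~ P a -> ~~ P c) ->
  pairwise r s -> (m <= count P s)%N -> all P (take m s).
Proof.
elim: s m => [|x s IH] m //= hrP /andP[hx hs] hm.
case: m hm => [|m] hm //=.
case hPx: (P x) => /=.
  apply: IH => //; last by move: hm; rewrite hPx.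
  by move=> a c ha hc; apply: hrP; rewrite inE ?ha ?hc orbT.
exfalso.
have h0 : count P s = 0%N.
  apply/eqP; rewrite -leqn0 leqNgt -has_count; apply/hasPn => c hc.
  apply: (hrP x c); rewrite ?mem_head ?inE ?hc ?orbT ?hPx //.
  by move/allP: hx; apply.
by move: hm; rewrite hPx h0.
Qed.
Section ClearChar.
Variables (geno b : bool) (n kappa : nat) (tb : seq (bits n) -> seq nat) (L : seq (bits n)).
Hypotheses (htb : valid_sort tb) (k0 : (0 < kappa)%N) (n0 : (0 < n)%N)
  (hcnt : (kappa <= count (pred1 (anchor n b)) L)%N) (hall : all (ntg b) L).

Let ord := tb L.

Lemma ord_perm : perm_eq ord (iota 0 (size L)). Proof. by case: (htb L). Qed.
Lemma ord_uniq : uniq ord. Proof. by rewrite (perm_uniq ord_perm) iota_uniq. Qed.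
Lemma ord_mem k : (k \in ord) = (k < size L)%N.
Proof. by rewrite (perm_mem ord_perm) mem_iota. Qed.
Lemma ord_size : size ord = size L.
Proof. by rewrite (perm_size ord_perm) size_iota. Qed.

Lemma ind_ntg k : (k < size L)%N -> ntg b (ind L k).
Proof. by move=> hk; apply: (allP hall); apply: mem_nth. Qed.

Lemma count_ord : count (fun k => ind L k == anchor n b) ord = count (pred1 (anchor n b)) L.
Proof.
rewrite (permP ord_perm) -[in RHS](mkseq_nth (zeros_str n) L) /mkseq count_map.
by [].
Qed.

Lemma take_anchor k : k \in take kappa ord -> ind L k = anchor n b.
Proof.
move=> hk; apply/eqP.
have : all (fun k => ind L k == anchor n b) (take kappa ord).
  apply: (@take_allP _ (fun i j => twomax (ind L j) <= twomax (ind L i))%N).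
  - move=> a c; rewrite !ord_mem => ha hc hr hna; apply/negP => /eqP hca.
    move: hr; rewrite hca (twomax_ntg (ind_ntg ha)) (twomax_ntg (b:=b)) ?ucnt_anchor; last first.
      by rewrite /ntg ucnt_anchor.
    rewrite -ucnt0 in hna; move: (ind_ntg ha); rewrite /ntg.
    move: (ucnt b (ind L a)) hna => u hu _; lia.
  - rewrite -sorted_pairwise; first by case: (htb L).
    by move=> x y z /= h1 h2; apply: leq_trans h2 h1.
  by rewrite count_ord.
by move/allP; apply.
Qed.

Lemma cleared_fitE :
  cleared_fit geno kappa tb L =
  (fun k => if k \in drop kappa ord then 0%N else twomax (ind L k)).
Proof.
rewrite /cleared_fit -/ord.
have hs : (kappa <= size ord)%N.
  by rewrite ord_size (leq_trans hcnt) // count_size.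
have hord := ord_uniq.
have hanc := take_anchor.
have hmem := ord_mem.
move: hs hord hanc hmem; case: ord => [|i0 rest] hs hord hanc hmem.
  by move: hs; case: kappa k0.
have hi0 : ind L i0 = anchor n b.
  by apply: hanc; case: kappa k0 => // k _; rewrite /= mem_head.
apply: outer_all => //.
  by rewrite hi0 (twomax_ntg (b:=b)) ?ucnt_anchor ?subn0 // /ntg ucnt_anchor.
move=> j hj; have hjL : (j < size L)%N by rewrite -hmem inE hj orbT.
have h' := ind_ntg hjL; rewrite hi0 dist_anchor (twomax_ntg h'); move: h'; rewrite /ntg => h.
apply/andP; split; last exact: h.
move: (ucnt b (ind L j)) h => u h; lia.
Qed.

End ClearChar.
Lemma count_tnthT (T : Type) (m : nat) (a : pred T) (t : m.-tuple T) :
  count a t = (\sum_(i < m) a (tnth t i))%N.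
Proof. by rewrite -sum1_count big_tuple big_mkcond /=; apply: eq_bigr => i _; case: (a _). Qed.

Lemma count_mem_uniq (A s : seq nat) : uniq A -> uniq s -> {subset A <= s} ->
  count (mem A) s = size A.
Proof.
move=> uA us sub; rewrite -size_filter; apply: perm_size; apply: uniq_perm.
- exact: filter_uniq.
- exact: uA.
move=> x; rewrite mem_filter; apply/andP/idP => [[]//|h]; split => //; exact: sub.
Qed.

Lemma sum_ord_count (m : nat) (A : seq nat) :
  (\sum_(i < m) (val i \in A))%N = count (mem A) (iota 0 m).
Proof.
rewrite -sum1_count big_mkcond /= -(big_mkord xpredT (fun i => nat_of_bool (i \in A))).
rewrite /index_iota subn0 [RHS]big_mkcond; apply: eq_bigr => i _; by case: (i \in A).
Qed.

Lemma sum_seq_const (R : realType) (T : Type) (W : seq T) (c : R) :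
  \sum_(z <- W) c = c *+ size W.
Proof. by elim: W => [|a W IH]; rewrite ?big_nil ?big_cons ?IH ?mulrS. Qed.

Section Pop.
Variables (R : realType) (geno b : bool) (n kappa mu : nat)
  (tb : seq (bits n) -> seq nat).
Hypotheses (htb : valid_sort tb) (k0 : (0 < kappa)%N) (n0 : (0 < n)%N)
  (kmu : (kappa < mu)%N).

Definition Inv (Q : pop mu n) : bool :=
  (kappa <= count (pred1 (anchor n b)) Q)%N && all (ntg b) Q.

Definition gR (x : bits n) : R := n%:R - 2 * (ucnt b x)%:R.
Definition Phi (Q : pop mu n) : R := \sum_(i < mu) gR (tnth Q i).

Variables (Q : pop mu n) (y : bits n).
Hypotheses (hQ : Inv Q) (hy : ntg b y).

Let L := rcons (tval Q) y.
Let ord := tb L.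
Let A := take kappa ord.
Let B := drop kappa ord.

Lemma L_size : size L = mu.+1. Proof. by rewrite /L size_rcons size_tuple. Qed.
Lemma L_cnt : (kappa <= count (pred1 (anchor n b)) L)%N.
Proof.
case/andP: hQ => h _; rewrite /L -cats1 count_cat (leq_trans h) //; exact: leq_addr.
Qed.
Lemma L_all : all (ntg b) L.
Proof. by case/andP: hQ => _ h; rewrite /L -cats1 all_cat h /= hy. Qed.

Lemma indL_lt (i : 'I_mu) : ind L i = tnth Q i.
Proof. by rewrite /ind /L nth_rcons size_tuple ltn_ord (tnth_nth (zeros_str n)). Qed.
Lemma indL_mu : ind L mu = y.
Proof. by rewrite /ind /L nth_rcons size_tuple ltnn eqxx. Qed.

Lemma fitstarE : fitstar geno kappa tb Q y =
  (fun k => if k \in B then 0%N else twomax (ind L k)).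
Proof. exact: (cleared_fitE geno htb k0 n0 L_cnt L_all). Qed.

Lemma ordL_uniq : uniq ord. Proof. exact: (ord_uniq L htb). Qed.
Lemma ordL_mem k : (k \in ord) = (k < mu.+1)%N.
Proof. by rewrite (ord_mem L htb) L_size. Qed.
Lemma ordL_size : size ord = mu.+1. Proof. by rewrite (ord_size L htb) L_size. Qed.

Lemma A_anchor k : k \in A -> ind L k = anchor n b.
Proof. exact: (take_anchor htb k0 n0 L_cnt L_all). Qed.

Lemma AB_disj k : k \in A -> k \in B -> False.
Proof.
move=> ha hb; have := ordL_uniq; rewrite -(cat_take_drop kappa ord) cat_uniq.
case/and3P=> _ /hasPn h _; by move: (h k hb); rewrite ha.
Qed.

Lemma AB_cover k : (k < mu.+1)%N -> (k \in A) || (k \in B).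
Proof. by rewrite -ordL_mem -{1}(cat_take_drop kappa ord) mem_cat. Qed.

Lemma A_size : size A = kappa.
Proof. by rewrite size_take ordL_size ifT //; lia. Qed.

Lemma A_count : count (mem A) (iota 0 mu.+1) = kappa.
Proof.
rewrite count_mem_uniq ?A_size ?iota_uniq //.
  by have := ordL_uniq; rewrite -(cat_take_drop kappa ord) cat_uniq => /andP[].
by move=> k hk; rewrite mem_iota /= add0n -ordL_mem (mem_take hk).
Qed.

Lemma B_size : size B = (mu.+1 - kappa)%N. Proof. by rewrite size_drop ordL_size. Qed.

Lemma B_ex : exists k : 'I_mu, val k \in B.
Proof.
have : ~~ all (pred1 mu) B.
  apply/negP => hB.
  have := @uniq_leq_size _ B [:: mu] (drop_uniq _ ordL_uniq).
  rewrite B_size /=; move=> h; have : (mu.+1 - kappa <= 1)%N.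
    by apply: h => x hx; rewrite inE; exact: (allP hB x hx).
  lia.
rewrite -has_predC => /hasP [j hj /= hjmu].
have : (j < mu.+1)%N by rewrite -ordL_mem (mem_drop hj).
rewrite ltnS leq_eqVlt (negbTE hjmu) /= => hj'.
by exists (Ordinal hj').
Qed.

Lemma ind_twomax_pos k : (k < mu.+1)%N -> (0 < twomax (ind L k))%N.
Proof.
move=> hk; have h : ntg b (ind L k) by apply: (allP L_all); apply: mem_nth; rewrite L_size.
rewrite (twomax_ntg h); move: h; rewrite /ntg; move: (ucnt b _) => u h; lia.
Qed.

Lemma worstE : worst geno kappa tb Q y = [seq z <- enum 'I_mu | val z \in B].
Proof.
rewrite /worst; apply: eq_filter => k; rewrite fitstarE.
case: ifP => hk.
  by apply/forallP => k'.
apply/negbTE/negP => /forallP h.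
have [k' hk'] := B_ex; have := h k'; rewrite hk'.
have := ind_twomax_pos (ltn_trans (ltn_ord k) (ltnSn mu)).
by move: (twomax _) => t; lia.
Qed.

Lemma worst_mem z : (z \in worst geno kappa tb Q y) = (val z \in B).
Proof. by rewrite worstE mem_filter mem_enum andbT. Qed.

Lemma worst_size : (0 < size (worst geno kappa tb Q y) <= mu)%N.
Proof.
rewrite worstE size_filter; apply/andP; split.
  by rewrite -has_count; have [k hk] := B_ex; apply/hasP; exists k; rewrite ?mem_enum.
by rewrite (leq_trans (count_size _ _)) // size_enum_ord.
Qed.

Definition repl (z : 'I_mu) : pop mu n := [tuple (if i == z then y else tnth Q i) | i < mu].

Lemma next_popE z : z \in worst geno kappa tb Q y -> next_pop geno kappa tb Q y z = repl z.
Proof.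
rewrite worst_mem => hz; rewrite /next_pop fitstarE hz leq0n.
by [].
Qed.

Lemma repl_Inv z : z \in worst geno kappa tb Q y -> Inv (repl z).
Proof.
rewrite worst_mem => hz; apply/andP; split; last first.
  apply/all_tnthP => i; rewrite tnth_mktuple; case: eqP => _ //.
  by case/andP: hQ => _ /all_tnthP; apply.
rewrite count_tnthT.
apply: (@leq_trans (\sum_(i < mu) ((val i \in A) + (i == z) * (mu \in A)))%N).
  rewrite big_split /= sum_ord_count (bigD1 z) //= eqxx mul1n big1 ?addn0; last first.
    by move=> i /negbTE ->.
  by rewrite -A_count -addn1 iotaD count_cat /= addn0 add0n.
apply: leq_sum => i _; rewrite tnth_mktuple.
case: (eqVneq i z) => [->|hiz].
  have -> : (val z \in A) = false by apply/negP => h; apply: (AB_disj h hz).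
  rewrite ?eqxx /= ?mul1n; case hm: (mu \in A) => //.
  by have := A_anchor hm; rewrite indL_mu => ->; rewrite eqxx.
rewrite /= mul0n addn0; case hi: (val i \in A) => //.
by have := A_anchor hi; rewrite indL_lt => ->; rewrite eqxx.
Qed.

Lemma gR_le (x : bits n) : gR x <= n%:R.
Proof. rewrite /gR; have : 0 <= ((ucnt b x)%:R : R) by []; lra. Qed.

Lemma gR_ge1 (x : bits n) : ntg b x -> 1 <= gR x.
Proof.
rewrite /ntg /gR => h.
have h' : (1 + 2 * ucnt b x <= n)%N by move: (ucnt b x) h => u h; lia.
have : ((1 + 2 * ucnt b x)%:R : R) <= n%:R by rewrite ler_nat.
by rewrite natrD natrM; lra.
Qed.

Lemma Phi_repl z : Phi (repl z) = Phi Q - gR (tnth Q z) + gR y.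
Proof.
rewrite /Phi (bigD1 z) //= [in RHS](bigD1 z) //= tnth_mktuple eqxx.
have -> : \sum_(i < mu | i != z) gR (tnth (repl z) i) = \sum_(i < mu | i != z) gR (tnth Q i).
  by apply: eq_bigr => i /negbTE hi; rewrite tnth_mktuple hi.
lra.
Qed.

Lemma sum_worst_ge :
  Phi Q - (kappa * n)%:R <= \sum_(z <- worst geno kappa tb Q y) gR (tnth Q z).
Proof.
rewrite worstE big_filter big_enum_cond /= /Phi (bigID (fun z : 'I_mu => val z \in B)) /=.
suff : \sum_(i < mu | val i \notin B) gR (tnth Q i) <= (kappa * n)%:R.
  by move: (\sum_(i < mu | _) _) => s; lra.
apply: (@le_trans _ _ (\sum_(i < mu) ((val i \in A)%:R * n%:R))).
  rewrite [X in _ <= X](bigID (fun z : 'I_mu => val z \in B)) /=.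
  apply: (@le_trans _ _ (0 + \sum_(i < mu | val i \notin B) ((val i \in A)%:R * n%:R))).
    rewrite add0r; apply: ler_sum => i hi.
    have := AB_cover (ltn_trans (ltn_ord i) (ltnSn mu)); rewrite (negbTE hi) orbF => ->.
    by rewrite mul1r gR_le.
  rewrite lerD2r; apply: sumr_ge0 => i _; apply: mulr_ge0; rewrite ?ler0n //.
rewrite -mulr_suml -natr_sum sum_ord_count -natrM ler_nat leq_mul2r.
apply/orP; right; rewrite -A_count -addn1 iotaD count_cat; exact: leq_addr.
Qed.

Lemma sum_worst_ge0 : 0 <= \sum_(z <- worst geno kappa tb Q y) gR (tnth Q z).
Proof.
apply: sumr_ge0 => z _; apply: le_trans (gR_ge1 _) => //.
by case/andP: hQ => _ /all_tnthP; apply.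
Qed.

Lemma step_bound :
  \sum_(z <- worst geno kappa tb Q y)
     (size (worst geno kappa tb Q y))%:R^-1 * Phi (next_pop geno kappa tb Q y z)
  <= Phi Q + gR y - (Phi Q - (kappa * n)%:R) / mu%:R.
Proof.
set W := worst geno kappa tb Q y.
have hW := worst_size; rewrite -/W in hW.
have -> : \sum_(z <- W) (size W)%:R^-1 * Phi (next_pop geno kappa tb Q y z) =
          \sum_(z <- W) (size W)%:R^-1 * (Phi Q + gR y - gR (tnth Q z)).
  rewrite big_seq_cond [RHS]big_seq_cond; apply: eq_bigr => z /andP[hz _].
  by rewrite next_popE // Phi_repl; congr (_ * _); lra.
rewrite -mulr_sumr big_split /= sum_seq_const sumrN -/W.
have hs : (0 < (size W)%:R :> R) by rewrite ltr0n; case/andP: hW.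
have hsm : ((size W)%:R <= mu%:R :> R) by rewrite ler_nat; case/andP: hW.
have hmu : (0 < mu%:R :> R) by rewrite ltr0n; lia.
rewrite mulrDr -[(Phi Q + gR y) *+ size W]mulr_natr.
set s := (size W)%:R in hs hsm *.
have e : s^-1 * ((Phi Q + gR y) * s) = Phi Q + gR y by field; rewrite gt_eqF.
rewrite e mulrN.
have h1 := sum_worst_ge; have h2 := sum_worst_ge0; rewrite -/W in h1 h2.
move: (\sum_(i <- W) gR (tnth Q i)) h1 h2 => S h1 h2.
have i1 : (Phi Q - (kappa * n)%:R) / mu%:R <= S / mu%:R.
  by apply: ler_wpM2r => //; rewrite invr_ge0 ltW.
have i2 : S / mu%:R <= S / s.
  by apply: ler_wpM2l => //; rewrite lef_pV2 ?posrE.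
rewrite [s^-1 * S]mulrC; lra.
Qed.

End Pop.
Section Drift.
Variables (R : realType) (geno b : bool) (n kappa mu : nat)
  (tb : seq (bits n) -> seq nat) (tgt : pred (bits n)).
Hypotheses (htb : valid_sort tb) (k0 : (0 < kappa)%N) (n0 : (0 < n)%N)
  (kmu : (kappa < mu)%N) (htgt : forall x, tgt x = ~~ ntg b x).

Lemma trans_lin (Q : pop mu n) (h : pop mu n -> R) :
  \sum_P trans R geno kappa tb tgt Q P * h P =
  \sum_(i < mu) mu%:R^-1 * \sum_(y | ~~ tgt y) mutp R (tnth Q i) y *
     \sum_(z <- worst geno kappa tb Q y) (size (worst geno kappa tb Q y))%:R^-1 *
        h (next_pop geno kappa tb Q y z).
Proof.
rewrite /trans.
under eq_bigr => P _ do rewrite mulr_suml.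
rewrite exchange_big /=; apply: eq_bigr => i _.
under eq_bigr => P _ do rewrite -mulrA mulr_suml.
rewrite -mulr_sumr exchange_big /=; congr (_ * _); apply: eq_bigr => y _.
under eq_bigr => P _ do rewrite -mulrA mulr_suml.
rewrite -mulr_sumr exchange_big /=; congr (_ * _); apply: eq_bigr => z _.
under eq_bigr => P _ do rewrite -mulrA.
rewrite -mulr_sumr; congr (_ * _).
rewrite (bigD1 (next_pop geno kappa tb Q y z)) //= eqxx mul1r big1 ?addr0 //.
by move=> P /negbTE hP; rewrite eq_sym hP mul0r.
Qed.


Definition pt (x : bits n) : R := \sum_(y | tgt y) mutp R x y.

Lemma gR_ge (x : bits n) : - n%:R <= gR R b x.
Proof.
rewrite /gR; have := ucnt_le b x; rewrite -(ler_nat R) => h; lra.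
Qed.

Lemma pt_ge0 x : 0 <= pt x.
Proof. by apply: sumr_ge0 => y _; apply: mutp_ge0. Qed.

Lemma parent_bound (x : bits n) (a : R) : n%:R <= a ->
  \sum_(y | ~~ tgt y) mutp R x y * (a + gR R b y) <=
  a + gR R b x - 2 * gR R b x / n%:R - (a - n%:R) * pt x.
Proof.
move=> ha.
have eA : \sum_y mutp R x y * (a + gR R b y) = a + gR R b x - 2 * gR R b x / n%:R.
  rewrite /gR.
  under eq_bigr => y _ do rewrite mulrDr mulrBr mulrCA.
  rewrite big_split /= sumrB -!mulr_suml sum_mutp // mul1r.
  have e3 := @exp_ucnt R n b x.
  rewrite -mulr_sumr e3 mul1r.
  have hn : (n%:R : R) != 0 by rewrite pnatr_eq0 -lt0n.
  by field.
have hsplit := eA; rewrite (bigID tgt) /= in hsplit.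
have htg : (a - n%:R) * pt x <= \sum_(y | tgt y) mutp R x y * (a + gR R b y).
  rewrite /pt mulr_sumr; apply: ler_sum => y _; rewrite mulrC.
  apply: ler_wpM2l; first exact: mutp_ge0.
  have := gR_ge y; lra.
move: hsplit htg; set S1 := \sum_(y | tgt y) _; set S2 := \sum_(y | ~~ tgt y) _.
lra.
Qed.

Lemma pt_lb (x : bits n) : ntg b x -> gR R b x <= 2 -> (n%:R * n%:R)^-1 <= pt x.
Proof.
move=> hx hg.
have hu : (n <= 2 * (ucnt b x).+1)%N.
  move: hg; rewrite /gR => hg.
  have : ((n : nat)%:R : R) <= (2 * ucnt b x + 2)%:R by rewrite natrD natrM; lra.
  rewrite ler_nat; lia.
have hlt : (ucnt b x < n)%N by move: hx; rewrite /ntg; lia.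
have : has (pred1 b) x.
  rewrite has_count; have := count_predC (fun c => c != b) x; rewrite size_tuple.
  rewrite -/(ucnt b x) => e.
  have -> : count (pred1 b) x = count (predC (fun c => c != b)) x.
    by apply: eq_count => c /=; rewrite negbK eq_sym.
  lia.
case/hasP => c /tnthP [k ->] /eqP hk.
have hf : tgt (flip k x) by rewrite htgt /ntg ucnt_flip // -leqNgt.
apply: (@le_trans _ _ (mutp R x (flip k x))).
  rewrite mutp_flip //.
  have hp : 0 <= (n%:R : R)^-1 <= 1 by rewrite pp_ge0 pp_le1.
  have hb := bernoulli n.-1 hp.
  have hn1 : (n.-1%:R : R) = n%:R - 1 by rewrite -[in RHS](prednK n0) mulrSr addrK.
  rewrite hn1 in hb.
  have hn : (n%:R : R) != 0 by rewrite pnatr_eq0 -lt0n.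
  have e : 1 - (n%:R - 1) * (n%:R : R)^-1 = n%:R^-1 by field.
  rewrite e in hb.
  rewrite invfM; apply: ler_wpM2l => //; exact: pp_ge0.
rewrite /pt (bigD1 (flip k x)) //=; rewrite lerDl; apply: sumr_ge0 => y _; exact: mutp_ge0.
Qed.

End Drift.
Lemma final_ineq (R : realType) (Phi a N mu n k kap : R) :
  0 < n -> 0 < mu -> 12 * n <= mu -> kap * n * n <= 4 * mu -> 0 <= N ->
  3 * mu - 2 * N <= Phi -> mu / 4 <= a - n ->
  mu * a = mu * Phi - Phi + kap * n -> k = (a - n) / (n * n) ->
  mu^-1 * (mu * a + (1 - 2 / n) * Phi - k * N) <= (1 - (2 * mu * n)^-1) * Phi.
Proof.
move=> hn hmu h12 hkap hN hPhi ha hma ->.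
set ni := n^-1.
have hni : 0 < ni by rewrite invr_gt0.
have hnn : n * ni = 1 by rewrite mulfV // gt_eqF.
have e1 : (a - n) / (n * n) = (a - n) * (ni * ni) by rewrite invfM.
have e2 : (2 * mu * n)^-1 = mu^-1 * ni / 2.
  by rewrite /ni; field; rewrite !gt_eqF.
rewrite e1 e2.
have hmi : 0 < mu^-1 by rewrite invr_gt0.
have hmm : mu * mu^-1 = 1 by rewrite mulfV // gt_eqF.
suff h : mu * a + (1 - 2 * ni) * Phi - (a - n) * (ni * ni) * N <= mu * Phi - Phi * ni / 2.
  have := ler_wpM2l (ltW hmi) h.
  have -> : mu^-1 * (mu * Phi - Phi * ni / 2) = (1 - mu^-1 * ni / 2) * Phi.
    by field; rewrite gt_eqF.
  by rewrite /ni mulrA.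
rewrite hma.
have s1 : kap * n <= 4 * mu * ni.
  have := ler_wpM2r (ltW hni) hkap; rewrite -[kap * n * n * ni]mulrA hnn mulr1 //.
have s2 : (3 * mu - 2 * N) * ni <= Phi * ni by apply: ler_wpM2r => //; exact: ltW.
have s3 : mu / 4 * (ni * ni) * N <= (a - n) * (ni * ni) * N.
  apply: ler_wpM2r => //; apply: ler_wpM2r => //; apply: mulr_ge0; exact: ltW.
have s4 : 3 * ni <= mu / 4 * (ni * ni).
  have := ler_wpM2r (mulr_ge0 (ltW hni) (ltW hni)) h12.
  have -> : 12 * n * (ni * ni) = 12 * ni by rewrite -mulrA (mulrA n) hnn mul1r.
  move=> h; lra.
have s5 : 3 * ni * N <= mu / 4 * (ni * ni) * N by apply: ler_wpM2r.
have e3 : (1 - 2 * ni) * Phi = Phi - 2 * (Phi * ni) by ring.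
rewrite e3.
have e4 : (3 * mu - 2 * N) * ni = 3 * (mu * ni) - 2 * (N * ni) by ring.
have e5 : 3 * ni * N = 3 * (N * ni) by ring.
rewrite e4 in s2; rewrite e5 in s5.
have hmn : 0 <= mu * ni by apply: mulr_ge0; exact: ltW.
have e6 : 4 * mu * ni = 4 * (mu * ni) by ring.
rewrite e6 in s1.
lra.
Qed.
Section Drift2.
Variables (R : realType) (geno b : bool) (n kappa mu : nat)
  (tb : seq (bits n) -> seq nat) (tgt : pred (bits n)).
Hypotheses (htb : valid_sort tb) (k0 : (0 < kappa)%N) (n0 : (0 < n)%N)
  (kmu : (kappa < mu)%N) (htgt : forall x, tgt x = ~~ ntg b x)
  (hkn : (kappa * n ^ 2 <= 4 * mu)%N) (hn48 : (48 <= n)%N).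

Lemma gR_ge1' (x : bits n) : ntg b x -> 1 <= gR R b x.
Proof.
rewrite /ntg /gR => h.
have h' : (1 + 2 * ucnt b x <= n)%N by move: (ucnt b x) h => u h; lia.
have : ((1 + 2 * ucnt b x)%:R : R) <= n%:R by rewrite ler_nat.
by rewrite natrD natrM; lra.
Qed.

Lemma gR_int (x : bits n) : ntg b x -> ~~ (gR R b x <= 2) -> 3 <= gR R b x.
Proof.
rewrite /ntg /gR => h1 h2.
have : ~~ (((n : nat)%:R : R) <= (2 * ucnt b x + 2)%:R).
  by rewrite natrD natrM; move: h2; apply: contra => h; lra.
rewrite ler_nat -ltnNge => h3.
have : ((2 * ucnt b x + 3)%:R : R) <= n%:R by rewrite ler_nat; lia.
rewrite natrD natrM; lra.
Qed.

Lemma drift (Q : pop mu n) : Inv b kappa Q ->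
  \sum_P trans R geno kappa tb tgt Q P * Phi R b P <=
  (1 - (2 * mu%:R * n%:R)^-1) * Phi R b Q.
Proof.
move=> hQ.
have hQi : forall i : 'I_mu, ntg b (tnth Q i).
  by move=> i; case/andP: hQ => _ /all_tnthP; apply.
rewrite trans_lin.
set Ph := Phi R b Q.
set a := Ph - (Ph - (kappa * n)%:R) / mu%:R.
have hmu : (0 < mu%:R :> R) by rewrite ltr0n; lia.
have hnR : (0 < n%:R :> R) by rewrite ltr0n.
have hPh1 : mu%:R <= Ph.
  rewrite /Ph /Phi; apply: (@le_trans _ _ (\sum_(i < mu) (1 : R))).
    by rewrite sumr_const card_ord.
  by apply: ler_sum => i _; apply: gR_ge1'.
have hma : mu%:R * a = mu%:R * Ph - Ph + (kappa * n)%:R.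
  by rewrite /a; field; rewrite gt_eqF.
have h12 : 12 * n%:R <= (mu%:R : R).
  have : (12 * n <= mu)%N.
    have : (48 * n <= n ^ 2)%N by rewrite expnS expn1 leq_mul2r hn48 orbT.
    move: (n ^ 2)%N => m; nia.
  by rewrite -(ler_nat R) natrM.
have hkR : (kappa%:R * n%:R * n%:R <= 4 * (mu%:R : R)).
  have : ((kappa * n ^ 2)%:R : R) <= (4 * mu)%:R by rewrite ler_nat.
  by rewrite !natrM mulrA.
have han : mu%:R / 4 <= a - n%:R.
  have hk : (0 : R) <= (kappa * n)%:R by [].
  have hprod : 0 <= (Ph - mu%:R) * (mu%:R - 1).
    apply: mulr_ge0; rewrite subr_ge0 //.
    by rewrite ler1n; lia.
  suff : mu%:R * (mu%:R / 4) <= mu%:R * (a - n%:R).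
    by rewrite ler_pM2l.
  have hp2 : 0 <= (mu%:R : R) * (mu%:R - 12 * n%:R) by apply: mulr_ge0; lra.
  have hn1 : (1 : R) <= n%:R by rewrite ler1n.
  have hp3 : 0 <= (mu%:R : R) * (n%:R - 1) by apply: mulr_ge0; lra.
  rewrite mulrBr hma; nra.
have ha : n%:R <= a.
  have : 0 <= (mu%:R : R) / 4 by rewrite divr_ge0 // ltW.
  lra.
set k := (a - n%:R) / (n%:R * n%:R).
have hk0 : 0 <= k by apply: divr_ge0; [lra | apply: mulr_ge0; exact: ltW].
set c := fun i : 'I_mu => ((((gR R b (tnth Q i) <= 2)%R : bool) : nat)%:R : R).
apply: (@le_trans _ _ (\sum_(i < mu) mu%:R^-1 *
   (a + gR R b (tnth Q i) * (1 - 2 / n%:R) - k * c i))).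
  apply: ler_sum => i _; apply: ler_wpM2l; first by rewrite invr_ge0 ltW.
  apply: (@le_trans _ _ (\sum_(y | ~~ tgt y) mutp R (tnth Q i) y * (a + gR R b y))).
    apply: ler_sum => y hy; apply: ler_wpM2l; first exact: mutp_ge0.
    have hy' : ntg b y by rewrite htgt negbK in hy.
    have := step_bound R geno htb k0 n0 kmu hQ hy'.
    by rewrite -/Ph /a; lra.
  apply: (le_trans (parent_bound b tgt n0 (tnth Q i) ha)).
  have : k * c i <= (a - n%:R) * pt R tgt (tnth Q i).
    rewrite /c /k; case hg: (gR R b (tnth Q i) <= 2)%R => /=.
      rewrite mulr1; apply: ler_wpM2l; first lra.
      exact: (pt_lb k0 n0 kmu htgt (hQi i) hg).
    rewrite mulr0; apply: mulr_ge0; first lra.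
    exact: pt_ge0.
  lra.
rewrite -mulr_sumr sumrB big_split /= sumr_const card_ord -mulr_suml -mulr_sumr.
rewrite -[a *+ mu]mulr_natl.
have -> : \sum_(i < mu) gR R b (tnth Q i) = Ph by [].
rewrite natrM in hma; rewrite [Ph * _]mulrC.
apply: (final_ineq hnR hmu h12 hkR _ _ han hma) => //.
  by apply: sumr_ge0 => i _; rewrite /c ler0n.
rewrite /Ph /Phi.
have -> : 3 * (mu%:R : R) - 2 * \sum_(i < mu) c i = \sum_(i < mu) (3 - 2 * c i).
  by rewrite sumrB sumr_const card_ord mulr_sumr mulr_natr.
apply: ler_sum => i _; rewrite /c; case hg: (gR R b (tnth Q i) <= 2)%R => /=.
  by rewrite mulr1; have := gR_ge1' (hQi i); lra.
by rewrite mulr0 subr0; apply: gR_int => //; rewrite hg.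
Qed.

End Drift2.
Section Numeric.
Variable R : realType.

Lemma geom_le (r : R) (K : nat) : 0 <= r < 1 -> \sum_(j < K) r ^+ j <= (1 - r)^-1.
Proof.
move=> /andP[r0 r1]; have h1 : 0 < 1 - r by lra.
elim: K => [|K IH]; first by rewrite big_ord0 invr_ge0 ltW.
rewrite big_ord_recl expr0.
under eq_bigr => j _ do rewrite exprS.
rewrite -mulr_sumr.
have : r * \sum_(i < K) r ^+ i <= r * (1 - r)^-1 by apply: ler_wpM2l.
have e : 1 + r * (1 - r)^-1 = (1 - r)^-1 by field; rewrite gt_eqF.
lra.
Qed.

Lemma tail_sum (S : nat -> R) (t0 : nat) (M r : R) :
  0 <= r < 1 -> (forall t, S t <= 1) -> (forall t, S t <= M * r ^+ t) ->
  M * r ^+ t0 <= 1 -> forall N, \sum_(t < N) S t <= t0%:R + (1 - r)^-1.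
Proof.
move=> hr hS1 hSM hM N.
have hr0 : 0 <= r by case/andP: hr.
suff : \sum_(t < N) S t <= (minn N t0)%:R + \sum_(j < N - t0) r ^+ j.
  move=> h; apply: (le_trans h); apply: lerD; first by rewrite ler_nat geq_minr.
  exact: geom_le.
elim: N => [|N IH]; first by rewrite big_ord0 min0n sub0n big_ord0 addr0.
rewrite big_ord_recr /=.
case: (ltnP N t0) => hN.
  have -> : (N.+1 - t0 = N - t0)%N by lia.
  have -> : minn N.+1 t0 = (minn N t0).+1 by lia.
  have := hS1 N; rewrite -natr1; lra.
have -> : (N.+1 - t0 = (N - t0).+1)%N by lia.
have -> : minn N.+1 t0 = minn N t0 by lia.
rewrite big_ord_recr /=.
have : S N <= r ^+ (N - t0).
  apply: (le_trans (hSM N)).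
  have -> : N = (t0 + (N - t0))%N by lia.
  rewrite exprD mulrA addKn.
  have : 0 <= r ^+ (N - t0) by apply: exprn_ge0.
  have e : (N - t0 = (t0 + (N - t0)) - t0)%N by lia.
  nra.
lra.
Qed.

Lemma ln_ge_half (m : R) : 2 <= m -> 1 / 2 <= ln m.
Proof.
move=> hm.
have hm0 : 0 < m by lra.
have h := @le_ln1Dx R (m^-1 - 1).
have hi : 0 < m^-1 by rewrite invr_gt0.
have hi2 : m^-1 <= 2^-1.
  by rewrite lef_pV2 ?posrE //; lra.
have e : 1 + (m^-1 - 1) = m^-1 by rewrite addrC subrK.
rewrite e lnV ?posrE // in h.
have : -1 < m^-1 - 1 by lra.
move=> /h; lra.
Qed.

Lemma log_bound (mu n : nat) : (2 <= mu)%N -> (1 <= n <= mu)%N ->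
  let d : R := (2 * mu%:R * n%:R)^-1 in
  let t0 := (Num.Def.trunc (ln (mu%:R * n%:R) / d)).+1 in
  (mu%:R * n%:R) * (1 - d) ^+ t0 <= 1 /\
  t0%:R + d^-1 <= 10 * mu%:R * n%:R * ln (mu%:R : R).
Proof.
move=> hmu /andP[hn1 hnm] d t0.
have hmuR : (2 : R) <= mu%:R by rewrite (ler_nat R 2).
have hnR : (1 : R) <= n%:R by rewrite ler1n.
have hnmR : (n%:R : R) <= mu%:R by rewrite ler_nat.
have hM : (1 : R) <= mu%:R * n%:R by nra.
have hd : 0 < d by rewrite invr_gt0; nra.
have hd1 : d <= 1.
  rewrite /d -[1]invr1 lef_pV2 ?posrE; nra.
have hlnM : 0 <= ln (mu%:R * n%:R : R) by apply: ln_ge0.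
have ht0 : ln (mu%:R * n%:R : R) / d < t0%:R by apply: truncnS_gt.
have ht0' : (t0%:R : R) <= ln (mu%:R * n%:R) / d + 1.
  rewrite /t0 -natr1 lerD2r; case/andP: (truncn_itv (divr_ge0 hlnM (ltW hd))) => //.
split.
  have h1 : (1 - d) ^+ t0 <= sequences.expR (- d) ^+ t0.
    apply: lerXn2r.
    - by rewrite nnegrE subr_ge0.
    - by rewrite nnegrE; apply: ltW; apply: expR_gt0.
    by have := expR_ge1Dx (- d); rewrite addrC.
  rewrite -expRM_natl in h1.
  have h2 : sequences.expR (t0%:R * - d) <= sequences.expR (- ln (mu%:R * n%:R)).
    rewrite ler_expR mulrN lerN2.
    by have := ht0; rewrite ltr_pdivrMr // mulrC => /ltW.
  rewrite expRN lnK ?posrE in h2; last by lra.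
  have hMpos : 0 < (mu%:R * n%:R : R) by lra.
  apply: (le_trans (ler_wpM2l (ltW hMpos) (le_trans h1 h2))).
  by rewrite mulfV // gt_eqF.
have hln : ln (mu%:R * n%:R : R) <= 2 * ln (mu%:R : R).
  have : ln (mu%:R * n%:R : R) <= ln (mu%:R ^+ 2 : R).
    have hp1 : (0 : R) < mu%:R * n%:R by lra.
    have hp2 : (0 : R) < mu%:R ^+ 2 by rewrite exprn_gt0 //; lra.
    rewrite ler_ln ?posrE // expr2.
    have hmu0 : (0 : R) <= mu%:R by lra.
    by apply: ler_wpM2l.
  rewrite lnXn; last lra.
  rewrite -[ln _ *+ 2]mulr_natl; exact: id.
have hh := ln_ge_half hmuR.
have hdi : d^-1 = 2 * mu%:R * n%:R by rewrite invrK.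
have e : ln (mu%:R * n%:R : R) / d = 2 * mu%:R * n%:R * ln (mu%:R * n%:R) by rewrite -hdi mulrC.
rewrite e in ht0'; rewrite hdi.
set L := ln (mu%:R : R) in hln hh *.
set L2 := ln (mu%:R * n%:R : R) in hln ht0' *.
set MN := (mu%:R * n%:R : R) in hM *.
have e2 : 2 * mu%:R * n%:R = 2 * MN by rewrite /MN mulrA.
have e3 : 10 * mu%:R * n%:R * L = 10 * MN * L by rewrite /MN !mulrA.
rewrite e2 e3; rewrite e2 in ht0'.
nra.
Qed.

End Numeric.
Lemma sum_fin_neq0 (R : realType) (T : finType) (P : pred T) (F : T -> R) :
  \sum_(i | P i) F i != 0 -> exists i, P i && (F i != 0).
Proof.
case: (pickP (fun i => P i && (F i != 0))) => [i hi|h]; first by exists i.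
by rewrite big1 ?eqxx // => i Pi; move: (h i); rewrite Pi /= => /negbFE/eqP.
Qed.

Lemma sum_seq_neq0 (R : realType) (T : eqType) (s : seq T) (F : T -> R) :
  \sum_(i <- s) F i != 0 -> exists2 i, i \in s & F i != 0.
Proof.
elim: s => [|x s IH]; first by rewrite big_nil eqxx.
rewrite big_cons; case: (eqVneq (F x) 0) => [->|hx _]; last by exists x; rewrite ?mem_head.
rewrite add0r => /IH [i hi hF]; by exists i; rewrite // inE hi orbT.
Qed.

Section Final.
Variables (R : realType) (geno b : bool) (n kappa mu : nat)
  (tb : seq (bits n) -> seq nat) (tgt : pred (bits n)) (P0 : pop mu n).
Hypotheses (htb : valid_sort tb) (k0 : (0 < kappa)%N) (n0 : (0 < n)%N)
  (kmu : (kappa < mu)%N) (htgt : forall x, tgt x = ~~ ntg b x)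
  (hkn : (kappa * n ^ 2 <= 4 * mu)%N) (hn48 : (48 <= n)%N)
  (hP0cnt : (kappa <= count (pred1 (anchor n b)) P0)%N).

Local Notation surv := (@Defs.surv R geno n kappa mu tb tgt P0).
Local Notation trans := (@Defs.trans R geno n kappa mu tb tgt).

Lemma trans_ge0 Q P : 0 <= trans Q P.
Proof.
rewrite /trans; apply: sumr_ge0 => i _; apply: mulr_ge0; first by rewrite invr_ge0.
apply: sumr_ge0 => y _; apply: mulr_ge0; first exact: mutp_ge0.
apply: sumr_ge0 => z _; apply: mulr_ge0; by rewrite ?invr_ge0 ?ler0n.
Qed.

Lemma surv_ge0 t P : 0 <= surv t P.
Proof.
elim: t P => [|t IH] P /=; first by rewrite ler0n.
apply: sumr_ge0 => Q _; apply: mulr_ge0; [exact: IH | exact: trans_ge0].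
Qed.

Lemma trans_supp Q P : Inv b kappa Q -> trans Q P != 0 -> Inv b kappa P.
Proof.
move=> hQ; rewrite /trans => /sum_fin_neq0 [i].
rewrite /= mulf_eq0 negb_or => /andP[_ /sum_fin_neq0 [y /andP[hy]]].
rewrite mulf_eq0 negb_or => /andP[_ /sum_seq_neq0 [z hz]].
rewrite mulf_eq0 negb_or => /andP[_]; rewrite pnatr_eq0 eqb0 negbK => /eqP <-.
have hy' : ntg b y by rewrite htgt negbK in hy.
rewrite (next_popE htb k0 n0 kmu hQ hy' hz).
exact: (repl_Inv htb k0 n0 kmu hQ hy' hz).
Qed.

Lemma surv_supp : Inv b kappa P0 -> forall t P, surv t P != 0 -> Inv b kappa P.
Proof.
move=> h0; elim=> [|t IH] P /=.
  by rewrite pnatr_eq0 eqb0 negbK => /andP[/eqP -> _].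
move=> /sum_fin_neq0 [Q /= hQ]; move: hQ; rewrite mulf_eq0 negb_or => /andP[h1 h2].
exact: (trans_supp (IH Q h1) h2).
Qed.

Lemma trans_sum_le1 Q : \sum_P trans Q P <= 1.
Proof.
have := trans_lin geno kappa tb tgt Q (fun _ => (1 : R)).
under eq_bigr => P _ do rewrite mulr1.
move=> ->.
have hmu : (0 < mu%:R :> R) by rewrite ltr0n; lia.
apply: (@le_trans _ _ (\sum_(i < mu) mu%:R^-1 * 1)); last first.
  by rewrite sumr_const card_ord mulr1 -[_ *+ mu]mulr_natr mulVf // gt_eqF.
apply: ler_sum => i _; apply: ler_wpM2l; first by rewrite invr_ge0 ltW.
apply: (@le_trans _ _ (\sum_y mutp R (tnth Q i) y * 1)); last first.
  by under eq_bigr do rewrite mulr1; rewrite sum_mutp.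
rewrite [X in _ <= X](bigID tgt) /= -[X in X <= _]add0r; apply: lerD.
  by apply: sumr_ge0 => y _; rewrite mulr1 mutp_ge0.
apply: ler_sum => y _; apply: ler_wpM2l; first exact: mutp_ge0.
set W := worst geno kappa tb Q y.
rewrite -mulr_sumr sum_seq_const.
case: (eqVneq (size W) 0) => [->|hW]; first by rewrite mulr0.
by rewrite -[_ *+ size W]mulr_natr mul1r mulVf // pnatr_eq0.
Qed.

Lemma tail_le1 t : tail_prob R geno kappa tb tgt P0 t <= 1.
Proof.
rewrite /tail_prob; elim: t => [|t IH] /=.
  rewrite (bigD1 P0) //= eqxx /= big1 ?addr0; first by case: (has tgt P0).
  by move=> P /negbTE ->.
rewrite exchange_big /=.
apply: (le_trans _ IH); apply: ler_sum => Q _.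
rewrite -mulr_sumr; rewrite -[X in _ <= X]mulr1; apply: ler_wpM2l.
  exact: surv_ge0.
exact: trans_sum_le1.
Qed.

Definition delta : R := (2 * mu%:R * n%:R)^-1.
Definition mt t : R := \sum_P surv t P * Phi R b P.

Lemma Phi_le (Q : pop mu n) : Phi R b Q <= mu%:R * n%:R.
Proof.
rewrite /Phi; apply: (@le_trans _ _ (\sum_(i < mu) (n%:R : R))).
  apply: ler_sum => i _; rewrite /gR; have : (0 : R) <= (ucnt b (tnth Q i))%:R by []; lra.
by rewrite sumr_const card_ord mulr_natl.
Qed.

Lemma Phi_ge1 (Q : pop mu n) : Inv b kappa Q -> 1 <= Phi R b Q.
Proof.
move=> hQ; case/andP: (hQ) => _ /all_tnthP hQi.
have i0 : 'I_mu by exists 0%N; lia.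
rewrite /Phi (bigD1 i0) //=; apply: (@le_trans _ _ (gR R b (tnth Q i0) + 0)).
  have := @gR_ge1' R b n kappa mu k0 n0 kmu hkn hn48 (tnth Q i0) (hQi i0).
  by rewrite addr0.
rewrite lerD2l; apply: sumr_ge0 => i _; exact: le_trans ler01 (gR_ge1' R k0 n0 kmu hkn hn48 (hQi i)).
Qed.

Lemma mt_rec : Inv b kappa P0 -> forall t, mt t.+1 <= (1 - delta) * mt t.
Proof.
move=> h0 t; rewrite /mt /=.
under eq_bigr => P _ do rewrite mulr_suml.
rewrite exchange_big /= mulr_sumr; apply: ler_sum => Q _.
under eq_bigr => P _ do rewrite -mulrA.
rewrite -mulr_sumr mulrCA.
case: (eqVneq (surv t Q) 0) => [->|hQ]; first by rewrite !(mul0r, mulr0).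
apply: ler_wpM2l; first exact: surv_ge0.
exact: (drift R geno htb k0 n0 kmu htgt hkn hn48 (surv_supp h0 hQ)).
Qed.

Lemma mt_bound : Inv b kappa P0 -> forall t, mt t <= (mu%:R * n%:R) * (1 - delta) ^+ t.
Proof.
move=> h0; have hd : 0 <= 1 - delta.
  rewrite subr_ge0 /delta -[1]invr1 lef_pV2 ?posrE ?ltr01 //.
    have : (1 : R) <= n%:R by rewrite ler1n.
    have : (1 : R) <= mu%:R by rewrite ler1n; lia.
    nra.
  have : (1 : R) <= n%:R by rewrite ler1n.
  have : (1 : R) <= mu%:R by rewrite ler1n; lia.
  nra.
elim=> [|t IH].
  rewrite expr0 mulr1 /mt /= (bigD1 P0) //= eqxx /=.
  case/andP: (h0) => _ hall.
  have -> : ~~ has tgt P0.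
    apply/hasPn => x hx; rewrite htgt negbK; exact: (allP hall).
  rewrite mul1r big1 ?addr0 ?Phi_le //.
  by move=> P /negbTE ->; rewrite mul0r.
apply: (le_trans (mt_rec h0 t)).
rewrite exprS mulrCA; apply: ler_wpM2l => //.
Qed.

Lemma tail_le_mt : Inv b kappa P0 -> forall t, tail_prob R geno kappa tb tgt P0 t <= mt t.
Proof.
move=> h0 t; rewrite /tail_prob /mt; apply: ler_sum => P _.
case: (eqVneq (surv t P) 0) => [->|hP]; first by rewrite mul0r.
rewrite -[X in X <= _]mulr1; apply: ler_wpM2l; first exact: surv_ge0.
exact: Phi_ge1 (surv_supp h0 hP).
Qed.

Lemma main_bound :
  expected_time_le geno kappa tb tgt P0 (10 * mu%:R * n%:R * ln (mu%:R : R)).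
Proof.
have hmu2 : (2 <= mu)%N by lia.
have hnm : (1 <= n <= mu)%N.
  apply/andP; split; first lia.
  have : (n <= n ^ 2)%N by rewrite expnS expn1 leq_pmulr.
  move: (n ^ 2)%N hkn => m; nia.
have [hM1 hB] := log_bound R hmu2 hnm.
have hlnmu : 0 <= ln (mu%:R : R) by apply: ln_ge0; rewrite ler1n; lia.
have hB0 : 0 <= 10 * mu%:R * n%:R * ln (mu%:R : R).
  by apply: mulr_ge0 => //; rewrite !mulr_ge0 ?ler0n.
case hP0: (has tgt P0).
  move=> N; rewrite big1; first exact: hB0.
  move=> t _; rewrite /tail_prob; apply: big1 => P _.
  move: (nat_of_ord t) => k.
  elim: k P => [|k IH] P /=; first by rewrite hP0 andbF.
  by apply: big1 => Q _; rewrite IH mul0r.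
have h0 : Inv b kappa P0.
  apply/andP; split; last first.
    by apply/allP => x hx; rewrite -[ntg b x]negbK -htgt; apply/negP => h;
       move/negbT: hP0 => /hasPn /(_ x hx); rewrite h.
  exact: hP0cnt.
move=> N.
have hd0 : 0 < delta.
  rewrite /delta invr_gt0; apply: mulr_gt0; last by rewrite ltr0n.
  by apply: mulr_gt0; rewrite ?ltr0n //; lia.
have hd1 : delta <= 1.
  have h1 : (1 : R) <= n%:R by rewrite ler1n.
  have h2 : (1 : R) <= mu%:R by rewrite ler1n; lia.
  have h3 : (1 : R) <= 2 * mu%:R * n%:R by nra.
  rewrite /delta invf_le1 //; lra.
have hr : 0 <= 1 - delta < 1 by apply/andP; split; lra.
have hSM : forall t, tail_prob R geno kappa tb tgt P0 t <= (mu%:R * n%:R) * (1 - delta) ^+ t.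
  by move=> t; apply: le_trans (tail_le_mt h0 t) (mt_bound h0 t).
have key := tail_sum hr tail_le1 hSM hM1 N.
have e : 1 - (1 - delta) = delta by ring.
rewrite e in key.
exact: le_trans key hB.
Qed.


End Final.
Unset Implicit Arguments.
Theorem corollary2 (R : realType) :
  exists (c : R) (n0 : nat),
  forall (geno : bool) (n kappa mu : nat) (tb : seq (bits n) -> seq nat)
         (P0 : pop mu n),
    (n0 <= n)%N -> (0 < kappa)%N -> (kappa * n ^ 2 <= 4 * mu)%N ->
    valid_sort tb ->
    ((kappa <= count (pred1 (zeros_str n)) P0)%N ->
       expected_time_le geno kappa tb (@atleast_half n) P0
         (c * mu%:R * n%:R * ln mu%:R)) /\
    ((kappa <= count (pred1 (ones_str n)) P0)%N ->
       expected_time_le geno kappa tb (@atmost_half n) P0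
         (c * mu%:R * n%:R * ln mu%:R)).
Proof.
exists 10, 48%N => geno n kappa mu tb P0 hn k0 hkn htb.
have n0 : (0 < n)%N by lia.
have kmu : (kappa < mu)%N.
  have : (48 * 48 <= n ^ 2)%N by rewrite expnS expn1 leq_mul.
  move: (n ^ 2)%N hkn => m; nia.
split => hc.
  apply: (main_bound R geno (b := false) htb k0 n0 kmu) => //.
  move=> x; rewrite /atleast_half /ntg -ones_ucnt -leqNgt //.
apply: (main_bound R geno (b := true) htb k0 n0 kmu) => //.
move=> x; rewrite /atmost_half /ntg ucnt_true -leqNgt.
have := count_size id x; rewrite size_tuple -/(ones x) => h.
apply/idP/idP; move: (ones x) h => o h; lia.
Qed.
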